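(* Let $1\gg \delta \gg n^{-1}$. Every $n$-vertex tree $T$ satisfies at least one of the following: (A) $T$ contains at least $\delta n/800$ vertex-disjoint bare paths, each of length at least $\delta^{-1}$; (B) $T$ contains at least $\delta^6 n$ non-neighbouring leaves; (C) removing from $T$ every leaf whose neighbour is adjacent to at least $\delta^{-4}$ leaves gives a tree with at most $n/100$ vertices.
   Context: A bare path in a tree is a path whose internal vertices all have degree 2 in the tree. A set of leaves is non-neighbouring if no two of them share a neighbour (equivalently, the leaves together with their neighbours span a matching). $a\gg b$ means the statement holds whenever $b\le a^C/C$ for a suitable fixed absolute constant $C$; in particular $n$ is sufficiently large in terms of $\delta$ and $\delta$ is sufficiently small. *)

(* Defs.v *)
From HB Require Import structures.
From mathcomp Require Import all_boot all_order all_algebra.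
From mathcomp Require Import reals.
Set Implicit Arguments. Unset Strict Implicit. Unset Printing Implicit Defensive.
Import Order.TTheory GRing.Theory Num.Theory.

Section Graphs.
Variable T : finType.
Variable e : rel T.

Definition is_tree : Prop :=
  [/\ symmetric e, irreflexive e,
      (forall x y : T, connect e x y) &
      (forall c : seq T, (3 <= size c)%N -> uniq c -> ~~ cycle e c)].

Definition deg (v : T) : nat := #|[set y | e v y]|.

Definition is_leaf (v : T) : bool := deg v == 1%N.

Definition is_gpath (p : seq T) : bool :=
  if p is x :: q then path e x q && uniq p else false.

Definition internal (p : seq T) : seq T :=
  if p is x :: q then behead (belast x q) else [::].

Definition bare_path (p : seq T) : bool :=
  is_gpath p && all (fun v => deg v == 2%N) (internal p).

Definition plen (p : seq T) : nat := (size p).-1.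

Definition non_neighbouring (L : {set T}) : Prop :=
  (forall l, l \in L -> is_leaf l) /\
  (forall l1 l2 y, l1 \in L -> l2 \in L -> l1 != l2 -> ~~ (e l1 y && e l2 y)).

Definition leaf_nbrs (y : T) : nat := #|[set z | e y z & is_leaf z]|.

End Graphs.

(* Main.v *)
Require Import Defs.
From HB Require Import structures.
From mathcomp Require Import all_boot all_order all_algebra.
From mathcomp Require Import zify.
Set Implicit Arguments. Unset Strict Implicit. Unset Printing Implicit Defensive.

Section Rooted.
Variables (T : finType) (e : rel T).
Hypothesis esym : symmetric e.
Hypothesis eirr : irreflexive e.
Hypothesis econn : forall x y : T, connect e x y.
Hypothesis eacyc : forall c : seq T, (3 <= size c)%N -> uniq c -> ~~ cycle e c.
Variable r : T.

Definition ball k := iter k (fun B : {set T} => B :|: [set y | [exists x in B, e x y]]) [set r].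

Lemma ballS k : ball k \subset ball k.+1.
Proof. by rewrite /= subsetUl. Qed.

Lemma ball_mono m k : m <= k -> ball m \subset ball k.
Proof.
move=> /subnK <-; elim: (k - m) => [|d IH]; first by rewrite add0n.
by rewrite addSn; apply: subset_trans IH (ballS _).
Qed.

Lemma ball_step x y k : x \in ball k -> e x y -> y \in ball k.+1.
Proof.
move=> xb exy; rewrite /= inE; apply/orP; right; rewrite inE.
by apply/existsP; exists x; rewrite xb.
Qed.

Lemma ballSP y k : y \in ball k.+1 -> y \in ball k \/ exists2 x, x \in ball k & e x y.
Proof.
rewrite /= !inE => /orP [->|]; first by left.
by move/existsP => [x /andP [xb exy]]; right; exists x.
Qed.

Lemma ball0 y : (y \in ball 0) = (y == r).
Proof. by rewrite /= inE. Qed.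

Lemma path_ball x p k : x \in ball k -> path e x p -> last x p \in ball (k + size p).
Proof.
elim: p x k => [|y p IH] x k /=; first by rewrite addn0.
move=> xb /andP [exy pp]; rewrite addnS -addSn; apply: IH pp.
exact: ball_step xb exy.
Qed.

Lemma in_ball_ex y : exists k, y \in ball k.
Proof.
have /connectP [p pp ->] := econn r y.
exists (0 + size p); apply: path_ball pp; by rewrite ball0.
Qed.

Definition depth y := ex_minn (in_ball_ex y).

Lemma depthP y : y \in ball (depth y).
Proof. by rewrite /depth; case: ex_minnP. Qed.

Lemma depth_min y k : y \in ball k -> depth y <= k.
Proof. by rewrite /depth; case: ex_minnP => m _ H /H. Qed.

Lemma depth0 y : (depth y == 0) = (y == r).
Proof.
apply/idP/idP => [/eqP d0|/eqP->].
  by have := depthP y; rewrite d0 ball0.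
by apply/eqP; apply/eqP; rewrite -leqn0; apply: depth_min; rewrite ball0.
Qed.

Lemma depth_edge u v : e u v -> depth v <= (depth u).+1.
Proof. by move=> euv; apply: depth_min; apply: ball_step (depthP u) euv. Qed.

Definition f y := odflt y [pick x | (x \in ball (depth y).-1) && e x y].

Lemma f_prop y : y != r -> e y (f y) /\ (depth (f y)).+1 = depth y.
Proof.
move=> yr; have : depth y != 0 by rewrite depth0.
case Ed : (depth y) => [//|d] _.
have yb := depthP y; rewrite Ed in yb.
have ynb : y \notin ball d.
  apply/negP => /depth_min; rewrite Ed; by rewrite ltnn.
have [x xb exy] : exists2 x, x \in ball d & e x y.
  by case: (ballSP yb) => // H; rewrite H in ynb.
rewrite /f Ed /=; case: pickP => [x' /andP [x'b ex'y]|/(_ x)]; last by rewrite xb exy.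
split; first by rewrite esym.
apply/eqP; rewrite eqn_leq; apply/andP; split.
  by rewrite ltnS; apply: depth_min.
by rewrite -Ed; apply: depth_edge.
Qed.

Lemma f_edge y : y != r -> e y (f y).
Proof. by case/f_prop. Qed.
Lemma f_depth y : y != r -> (depth (f y)).+1 = depth y.
Proof. by case/f_prop. Qed.

Lemma depth_pos y : y != r -> 0 < depth y.
Proof. by move=> yr; rewrite lt0n depth0. Qed.


Lemma notin_low (s : seq T) a d : all (fun x => depth x <= d) s -> depth a = d.+1 -> a \notin s.
Proof.
move=> /allP H da; apply/negP => /H; by rewrite da ltnn.
Qed.

Lemma neq_depth x y : depth x != depth y -> x != y.
Proof. by apply: contra => /eqP ->. Qed.

Lemma samedepth d : forall a b, depth a = d -> depth b = d -> a != b ->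
  exists q, [/\ path e a q, last a q = b, uniq (a :: q), 1 < size q &
                all (fun x => depth x <= d) q].
Proof.
elim: d => [|d IH] a b da db ab.
  move: ab; move/eqP: da; rewrite depth0 => /eqP ->; move/eqP: db; rewrite depth0 => /eqP ->.
  by rewrite eqxx.
have ar : a != r by rewrite -depth0 da.
have br : b != r by rewrite -depth0 db.
have dfa : depth (f a) = d by apply/eqP; rewrite -eqSS f_depth // da.
have dfb : depth (f b) = d by apply/eqP; rewrite -eqSS f_depth // db.
case: (eqVneq (f a) (f b)) => [Efab|nab].
  exists [:: f a; b]; split => //=.
  - by rewrite f_edge // Efab esym f_edge.
  - rewrite /= !inE negb_or ab andbT (neq_depth (x := a) (y := f a)) ?(neq_depth (x := f a) (y := b)) //.
      by rewrite dfa db ltn_eqF.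
    by rewrite dfa da gtn_eqF.
  - by rewrite dfa db leqnn leqnSn.
have [q [pq lq uq sq aq]] := IH _ _ dfa dfb nab.
exists (rcons (f a :: q) b); split.
- rewrite rcons_path /= f_edge // pq /= lq esym f_edge //.
- by rewrite last_rcons.
- have al : all (fun x => depth x <= d) (f a :: q) by rewrite /= dfa leqnn aq.
  rewrite cons_uniq mem_rcons in_cons negb_or ab (notin_low al da) rcons_uniq uq andbT.
  by rewrite (notin_low al db).
- by rewrite size_rcons.
- rewrite all_rcons db leqnn /= dfa leqnSn /=.
  by apply: sub_all aq => x /= /leq_trans; apply; apply: leqnSn.
Qed.

Lemma edge_parent u v : e u v -> (u != r /\ f u = v) \/ (v != r /\ f v = u).
Proof.
wlog: u v / depth u <= depth v => [W|duv] euv.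
  case: (leqP (depth u) (depth v)) => H; first exact: W.
  by rewrite esym in euv; case: (W v u (ltnW H) euv); [right|left].
have uv : u != v by apply/negP => /eqP E; rewrite E (eirr v) in euv.
have : depth v <= (depth u).+1 by apply: depth_edge.
rewrite leq_eqVlt ltnS => /orP [/eqP dv|dvu]; last first.
  have Ed : depth u = depth v by apply/eqP; rewrite eqn_leq duv dvu.
  have [q [pq lq uq sq aq]] := samedepth Ed (erefl _) uv.
  have := eacyc (c := u :: q); rewrite /= ltnS sq => /(_ isT uq).
  by rewrite rcons_path pq lq esym euv.
have vr : v != r by rewrite -depth0 dv.
case: (eqVneq (f v) u) => [E|fvu]; first by right.
exfalso.
have dfv : depth (f v) = depth u by apply/eqP; rewrite -eqSS f_depth // dv.
have [q [pq lq uq sq aq]] := samedepth dfv (erefl _) fvu.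
have al : all (fun x => depth x <= depth u) (f v :: q) by rewrite /= dfv leqnn aq.
have : ~~ cycle e (v :: f v :: q).
  apply: eacyc; first by rewrite /= !ltnS ltnW.
  by rewrite cons_uniq (notin_low al dv) uq.
by rewrite /= f_edge // rcons_path pq lq euv.
Qed.


Definition children p := [set w | (w != r) && (f w == p)].

Lemma ffp p : p != r -> f p \in children p -> False.
Proof.
move=> pr; rewrite inE => /andP [fpr /eqP ffp].
have h1 := f_depth pr; have h2 := f_depth fpr; rewrite ffp in h2.
move: h1 h2; lia.
Qed.

Lemma deg_children p : deg e p = #|children p| + (p != r).
Proof.
rewrite /deg; case: (eqVneq p r) => [->|pr].
  rewrite addn0; apply: eq_card => y; rewrite !inE.
  apply/idP/idP => [/edge_parent [[]|[-> ->]]|/andP [yr /eqP <-]]; rewrite ?eqxx //.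
  by rewrite esym f_edge.
have -> : [set y | e p y] = f p |: children p; last first.
  rewrite cardsU1 addn1; case: (boolP (f p \in children p)) => [/(ffp pr)|_] //.
apply/setP => y; rewrite !inE.
apply/idP/idP => [/edge_parent [[_ ->]|[-> ->]]|]; rewrite ?eqxx ?orbT //.
case/orP => [/eqP ->|/andP [yr /eqP <-]]; first exact: f_edge.
by rewrite esym f_edge.
Qed.

Lemma iter_depth m v : (forall i, i < m -> iter i f v != r) -> depth (iter m f v) + m = depth v.
Proof.
elim: m => [|m IH] H; first by rewrite addn0.
rewrite iterS addnS -addSn f_depth; last exact: H.
by apply: IH => i lt; apply: H; rewrite ltnS ltnW.
Qed.

Lemma path_traject m v : (forall i, i < m -> iter i f v != r) -> path e v (traject f (f v) m).
Proof.
elim: m v => [|m IH] v H //=.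
rewrite f_edge; last by apply: (H 0).
apply: IH => i lt; rewrite -iterSr; exact: H.
Qed.

Lemma uniq_traject m v : (forall i, i < m -> iter i f v != r) -> uniq (traject f v m.+1).
Proof.
move=> H; rewrite looping_uniq; apply/negP => /trajectP [i lt E].
have := iter_depth H; have := @iter_depth i v (fun j lj => H j (ltn_trans lj lt)).
rewrite E => h1; rewrite -h1 => /eqP; rewrite eqn_add2l => /eqP mi; by rewrite mi ltnn in lt.
Qed.


Hypothesis rW : ~~ is_leaf e r.

Definition Wset := [set w | ~~ is_leaf e w].
Definition cnt p := #|[set w in Wset | (w != r) && (f w == p)]|.
Definition nice p := [&& p \in Wset, p != r, deg e p == 2 & cnt p == 1].
Definition Nset := [set p in Wset | ~~ nice p].
Definition Sset := [set y | [exists z, e y z && is_leaf e z]].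
Definition Qset := [set c | nice c && ~~ nice (f c)].

Lemma rinW : r \in Wset. Proof. by rewrite inE. Qed.

Lemma f_in_W w : w != r -> f w \in Wset.
Proof.
move=> wr; case: (eqVneq (f w) r) => [->|fwr]; first exact: rinW.
rewrite inE /is_leaf deg_children fwr addn1 eqSS -lt0n.
by apply/card_gt0P; exists w; rewrite inE wr eqxx.
Qed.

Lemma card_part (B : {set T}) :
  #|[set w in Wset | (w != r) && (f w \in B)]| = \sum_(p in B) cnt p.
Proof.
rewrite -sum1_card (partition_big f (mem B)) /=; last first.
  by move=> i; rewrite !inE => /andP [_ /andP [_ ->]].
apply: eq_bigr => j jB; rewrite /cnt -sum1_card; apply: eq_bigl => i; rewrite !inE.
by case: (eqVneq (f i) j) => [->|]; rewrite ?jB ?andbT ?andbF.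
Qed.

Lemma sum_cnt_W : (\sum_(p in Wset) cnt p).+1 = #|Wset|.
Proof.
rewrite -card_part (cardsD1 r Wset) rinW add1n; congr _.+1.
apply: eq_card => w; rewrite !inE.
case: (eqVneq w r) => /= wr; first by rewrite andbF.
by have := f_in_W wr; rewrite inE => ->; rewrite andbT.
Qed.

Lemma nice_W p : nice p -> p \in Wset. Proof. by case/and4P. Qed.
Lemma nice_r p : nice p -> p != r. Proof. by case/and4P. Qed.

Lemma nice_children p : nice p -> #|children p| = 1.
Proof.
case/and4P => _ pr /eqP d2 _; move: d2; rewrite deg_children pr addn1; by case.
Qed.

Lemma nice_uniq p w1 w2 : nice p -> w1 != r -> w2 != r -> f w1 = p -> f w2 = p -> w1 = w2.
Proof.
move=> /nice_children /eqP /cards1P [x Ex] w1r w2r f1 f2.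
have : w1 \in children p by rewrite inE w1r f1 eqxx.
have : w2 \in children p by rewrite inE w2r f2 eqxx.
by rewrite Ex !inE => /eqP -> /eqP ->.
Qed.

Lemma nice_child_W p w : nice p -> w != r -> f w = p -> w \in Wset.
Proof.
move=> np wr fw; have := np; case/and4P => _ _ _ /eqP /eqP /cards1P [x Ex].
have : x \in [set w in Wset | (w != r) && (f w == p)] by rewrite Ex inE.
rewrite !inE => /and3P [xW xr /eqP fx].
by rewrite (nice_uniq np wr xr fw fx).
Qed.

Definition ch p := odflt p [pick w | (w != r) && (f w == p)].

Lemma ch_prop p : nice p -> ch p != r /\ f (ch p) = p.
Proof.
move=> np; rewrite /ch; case: pickP => [w /andP [wr /eqP fw] //|H].
have := nice_children np; move/eqP/cards1P => [x Ex].
have : x \in children p by rewrite Ex inE.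
by rewrite inE H.
Qed.

Lemma ch_f y : nice (f y) -> y != r -> ch (f y) = y.
Proof.
move=> nf yr; have [chr fch] := ch_prop nf.
exact: nice_uniq nf chr yr fch erefl.
Qed.

Lemma iter_ch_f j x : (forall i, i < j -> iter i f x != r /\ nice (iter i.+1 f x)) ->
  iter j ch (iter j f x) = x.
Proof.
elim: j => [//|j IH] H.
rewrite iterSr iterS ch_f; first by apply: IH => i lt; apply: H; rewrite ltnS ltnW.
  by case: (H j (ltnSn j)).
by case: (H j (ltnSn j)).
Qed.

Lemma sumN : (\sum_(p in Nset) cnt p).+1 = #|Nset|.
Proof.
have E1 := sum_cnt_W.
have E2 : #|Wset| = \sum_(i in Wset) 1 by rewrite sum1_card.
have s1 : \sum_(p in Wset) cnt p =
   \sum_(i in Wset | nice i) cnt i + \sum_(i in Wset | ~~ nice i) cnt i by rewrite (bigID nice).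
have s2 : \sum_(i in Wset) 1 =
   \sum_(i in Wset | nice i) 1 + \sum_(i in Wset | ~~ nice i) 1 by rewrite (bigID nice).
have e0 : \sum_(i in Wset | nice i) cnt i = \sum_(i in Wset | nice i) 1.
  by apply: eq_bigr => i /andP [_ /and4P [_ _ _ /eqP]].
have e1 : \sum_(i in Nset) cnt i = \sum_(i in Wset | ~~ nice i) cnt i.
  by apply: eq_bigl => i; rewrite inE.
have e2 : #|Nset| = \sum_(i in Wset | ~~ nice i) 1.
  by rewrite -sum1_card; apply: eq_bigl => i; rewrite inE.
rewrite e1 e2; move: E1; rewrite E2 s1 s2 e0; lia.
Qed.


Lemma N_notS p : p \in Nset -> p \notin Sset -> p != r -> 1 < cnt p.
Proof.
rewrite inE => /andP [pW np] pS pr.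
rewrite ltnNge; apply/negP => c1.
have dpos : 0 < #|children p|.
  move: pW; rewrite inE /is_leaf deg_children pr addn1 eqSS; by rewrite lt0n.
case: (boolP (children p \subset Wset)) => [sub|].
  have ec : cnt p = #|children p|.
    apply: eq_card => w; rewrite !inE.
    case: (boolP ((w != r) && (f w == p))) => wc; rewrite ?andbF ?andbT //.
    by have := subsetP sub w; rewrite !inE wc => ->.
  have c1' : #|children p| = 1 by move: c1 dpos; rewrite ec; lia.
  move/negP: np; apply; apply/and4P; split => //.
    by rewrite deg_children pr c1'.
  by rewrite ec c1'.
case/subsetPn => w; rewrite !inE => /andP [wr /eqP fw]; rewrite negbK => wl.
move/negP: pS; apply; rewrite inE; apply/existsP; exists w.
by rewrite wl andbT esym -fw f_edge.
Qed.

Lemma N_bound : #|Nset| <= 2 * #|Sset :|: [set r]|.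
Proof.
set S' := Sset :|: [set r].
have E : #|Nset| = \sum_(p in Nset | p \in S') 1 + \sum_(p in Nset | p \notin S') 1.
  by rewrite -(bigID (fun p => p \in S')) sum1_card.
have E2 : \sum_(p in Nset) cnt p =
   \sum_(p in Nset | p \in S') cnt p + \sum_(p in Nset | p \notin S') cnt p.
  by rewrite -(bigID (fun p => p \in S')).
have H2 : \sum_(p in Nset | p \notin S') (1 + 1) <= \sum_(p in Nset | p \notin S') cnt p.
  apply: leq_sum => p /andP [pN pS']; apply: N_notS => //.
    by apply: contra pS' => h; rewrite inE h.
  by apply: contra pS' => /eqP h; rewrite !inE h eqxx orbT.
rewrite big_split /= in H2.
have Ha : \sum_(p in Nset | p \in S') 1 <= #|S'|.
  rewrite sum1_card; apply: subset_leq_card; apply/subsetP => p; rewrite inE => /andP [].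
  by move=> _; rewrite /S' !inE.
have := sumN; rewrite E2 E; lia.
Qed.

Lemma sumN_le : \sum_(p in Nset) cnt p <= #|Nset|.
Proof. by rewrite -sumN. Qed.

Lemma Q_bound : #|Qset| <= #|Nset|.
Proof.
apply: leq_trans sumN_le; rewrite -card_part; apply: subset_leq_card.
apply/subsetP => c; rewrite !inE => /andP [nc nfc].
rewrite (nice_r nc) /=; have := nice_W nc; rewrite inE => -> /=.
by rewrite nfc; have := f_in_W (nice_r nc); rewrite inE => ->.
Qed.


Variable K : nat.
Hypothesis K0 : 0 < K.

Definition GB := [set v | (depth v %% K.+1 == K) && [forall i : 'I_K, nice (iter i.+1 f v)]].
Definition gf (pr : T * 'I_K) := iter pr.2.+1 f pr.1.
Definition hf (pr : T * 'I_K) := iter pr.2 ch pr.1.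
Definition tt x := depth x %% K.+1.

Lemma down m y : nice y ->
  (exists v, [/\ iter m f v = y, forall i, i < m -> iter i f v != r &
                 forall i, 0 < i <= m -> nice (iter i f v)]) \/
  (exists b z, [/\ 0 < b <= m, iter b f z = y, ~~ nice z &
                 forall i, 0 < i <= b -> nice (iter i f z)]).
Proof.
move=> ny; elim: m => [|m IH].
  left; exists y; split => // i; by case: i.
case: IH => [[v [iv vr vn]]|[b [z [bb iz nz zn]]]].
  case: (boolP (nice v)) => nv.
    { left; exists (ch v); have [cr fc] := ch_prop nv; split.
      - by rewrite iterSr fc.
      - case => [|i] lt; first by [].
        by rewrite iterSr fc; apply: vr.
      - case => [|i] // /andP [_ im]; rewrite iterSr fc.
        case: i im => [|i] im; first by [].
        by apply: vn. }
  right; exists m, v; split => //.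
  - rewrite leqnSn andbT lt0n; apply/negP => /eqP m0.
    by move: iv nv; rewrite m0 /= => ->; rewrite ny.
right; exists b, z; split => //.
by case/andP: bb => -> /= bm; rewrite ltnW.
Qed.

Lemma modK q u : u < K.+1 -> (q * K.+1 + u) %% K.+1 = u.
Proof. by move=> uK; rewrite modnMDl modn_small. Qed.

Lemma tt_le x : tt x <= K.
Proof. by rewrite /tt -ltnS ltn_pmod. Qed.

Lemma L_cover x : nice x -> tt x < K ->
  x \in gf @: setX (GB :|: Nset) setT :|: hf @: setX Qset setT.
Proof.
move=> nx tK.
case: (boolP [forall i : 'I_(tt x).+1, nice (iter i f x)]) => [/forallP Hall|/forallPn [i0 ni0]].
  have Hall' : forall k, k <= tt x -> nice (iter k f x).
    by move=> k kt; apply: (Hall (Ordinal (n := (tt x).+1) (m := k) kt)).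
  set m := K - tt x.
  have m0 : 0 < m by rewrite /m subn_gt0.
  have mK : m.-1 < K by rewrite /m; lia.
  have [[v [iv vr vn]]|[b [z [bb iz nz zn]]]] := down m nx.
    have dv : depth v = depth x + m by rewrite -iv iter_depth.
    have vGB : v \in GB.
      rewrite inE; apply/andP; split.
        rewrite dv (divn_eq (depth x) K.+1) -/(tt x) -addnA.
        have -> : tt x + m = K by rewrite /m subnKC // ltnW.
        by rewrite modK.
      apply/forallP => i.
      case: (leqP i.+1 m) => im; first by apply: vn; rewrite im.
      have -> : i.+1 = (i.+1 - m) + m by rewrite subnK // ltnW.
      rewrite iterD iv; apply: Hall'.
      by have := ltn_ord i; rewrite /m; lia.
    rewrite inE; apply/orP; left; apply/imsetP.
    exists (v, Ordinal mK); first by rewrite in_setX in_setU vGB in_setT.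
    by rewrite /gf /= -iterS prednK.
  have bK : b.-1 < K by move: bb; rewrite /m; lia.
  have zN : z \in Nset.
    rewrite inE nz andbT; case: (eqVneq z r) => [->|zr]; first exact: rinW.
    apply: (nice_child_W (p := f z)) => //.
    by apply: (zn 1); case/andP: bb.
  rewrite inE; apply/orP; left; apply/imsetP.
  exists (z, Ordinal bK); first by rewrite in_setX in_setU zN orbT in_setT.
  by rewrite /gf /= -iterS prednK //; case/andP: bb.
have exP : exists j, (j <= tt x) && ~~ nice (iter j f x).
  by exists i0; rewrite ni0 andbT -ltnS.
case: (ex_minnP exP) => j /andP [jt nj] jmin.
have Hlt : forall k, k < j -> nice (iter k f x).
  move=> k kj; apply/negPn/negP => nk.
  have := jmin k; rewrite nk andbT (leq_trans (ltnW kj) jt) => /(_ isT).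
  by rewrite leqNgt kj.
have j0 : 0 < j by case: j jt nj jmin Hlt => //; rewrite /= nx.
have jK : j.-1 < K by lia.
have cQ : iter j.-1 f x \in Qset.
  rewrite inE Hlt; last by rewrite prednK.
  by rewrite /= -iterS prednK.
rewrite inE; apply/orP; right; apply/imsetP.
exists (iter j.-1 f x, Ordinal jK); first by rewrite in_setX cQ in_setT.
rewrite /hf /= iter_ch_f // => k kj; split.
  by apply: nice_r; apply: Hlt; lia.
by apply: Hlt; lia.
Qed.


Lemma cardU_le (A B : {set T}) : #|A :|: B| <= #|A| + #|B|.
Proof. exact: (leq_card_setU A B).1. Qed.

Lemma H_cover x : nice x -> tt x = K -> x \in ch @: [set y | nice y && (tt y < K)] :|: Qset.
Proof.
move=> nx ttx; rewrite inE; case: (boolP (nice (f x))) => nfx; last by rewrite inE nx nfx orbT.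
apply/orP; left; apply/imsetP; exists (f x); last by rewrite ch_f // nice_r.
rewrite inE nfx /=.
have fd := f_depth (nice_r nx).
move: ttx; rewrite /tt -fd modnS; case: ifP => _; first by move=> K0'; move: K0; rewrite -K0'.
move=> E; have := ltnSn (depth (f x) %% K.+1); by rewrite {2}E.
Qed.

Lemma count_main : #|Wset| <= 2 * K * #|GB| + 6 * K * #|Nset|.
Proof.
set NI := [set x | nice x].
set Ls := [set y | nice y && (tt y < K)].
set Hs := [set y | nice y && (tt y == K)].
have h1 : #|Wset| <= #|NI| + #|Nset|.
  apply: leq_trans (cardU_le _ _); apply: subset_leq_card; apply/subsetP => w wW.
  rewrite !inE; case: (nice w) => //=; rewrite andbT; by move: wW; rewrite inE.
have h2 : #|NI| <= #|Ls| + #|Hs|.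
  apply: leq_trans (cardU_le _ _); apply: subset_leq_card; apply/subsetP => w.
  rewrite !inE => nw; rewrite nw /= orbC -leq_eqVlt; exact: tt_le.
have h3 : #|Ls| <= (#|GB| + #|Nset|) * K + #|Nset| * K.
  have hq := Q_bound.
  apply: leq_trans (_ : #|gf @: setX (GB :|: Nset) setT| + #|hf @: setX Qset setT| <= _).
    apply: leq_trans (cardU_le _ _); apply: subset_leq_card; apply/subsetP => w.
    rewrite inE => /andP [nw tw]; exact: L_cover.
  apply: leq_add.
    apply: leq_trans (leq_imset_card _ _) _; rewrite cardsX cardsT card_ord leq_mul2r.
    by rewrite cardU_le orbT.
  apply: leq_trans (leq_imset_card _ _) _; rewrite cardsX cardsT card_ord leq_mul2r.
  by rewrite hq orbT.
have h4 : #|Hs| <= #|Ls| + #|Nset|.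
  apply: leq_trans (_ : #|ch @: Ls :|: Qset| <= _).
    apply: subset_leq_card; apply/subsetP => w; rewrite inE => /andP [nw /eqP tw].
    exact: H_cover.
  apply: leq_trans (cardU_le _ _) _; apply: leq_add; first exact: leq_imset_card.
  exact: Q_bound.
have k0 := K0; move: h1 h2 h3 h4 k0; nia.
Qed.


Lemma GB_nr v i : v \in GB -> i < K -> iter i f v != r /\ nice (iter i.+1 f v).
Proof.
rewrite inE => /andP [/eqP tv /forallP H] iK.
split; last by apply: (H (Ordinal iK)).
case: i iK => [|i] iK.
  by rewrite /= -depth0; apply/negP => /eqP d0; move: tv; rewrite d0 mod0n => K0'; move: K0; rewrite -K0'.
by apply: nice_r; apply: (H (Ordinal (ltnW iK))).
Qed.

Lemma mem_internal_behead (x y : T) s : y \in behead (belast x s) -> y \in s.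
Proof. case: s => [|a s] //= /mem_belast. by []. Qed.

Definition Pl := [seq traject f v K.+1 | v <- enum GB].

Lemma Pl_bare : all (bare_path e) Pl.
Proof.
apply/allP => p /mapP [v]; rewrite mem_enum => vGB ->.
have H := GB_nr vGB.
rewrite /bare_path /=; apply/andP; split.
  apply/andP; split; first by apply: path_traject => i /H [].
  by apply: (uniq_traject (m := K)) => i /H [].
apply/allP => y /mem_internal_behead /trajectP [i iK ->].
by rewrite -iterSr; have [_ /and4P [_ _ /eqP -> _]] := H i iK.
Qed.

Lemma Pl_len p : p \in Pl -> plen p = K.
Proof. by case/mapP => v _ ->; rewrite /plen size_traject. Qed.

Lemma Pl_size : size Pl = #|GB|.
Proof. by rewrite size_map cardE. Qed.

Lemma GB_disj v w : v \in GB -> w \in GB -> v != w ->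
  [disjoint traject f v K.+1 & traject f w K.+1].
Proof.
move=> vG wG vw; rewrite disjoint_has; apply/hasPn => y /trajectP [i iK ->].
apply/negP => /trajectP [j jK E].
have Hv := GB_nr vG; have Hw := GB_nr wG.
have dv := @iter_depth i v (fun k kk => (Hv k (leq_trans kk iK)).1).
have dw := @iter_depth j w (fun k kk => (Hw k (leq_trans kk jK)).1).
have tv : depth v %% K.+1 = K by move: vG; rewrite inE => /andP [/eqP].
have tw : depth w %% K.+1 = K by move: wG; rewrite inE => /andP [/eqP].
have ev := divn_eq (depth v) K.+1; have ew := divn_eq (depth w) K.+1.
rewrite tv in ev; rewrite tw in ew.
have m1 : depth (iter i f v) %% K.+1 = K - i.
  have -> : depth (iter i f v) = depth v %/ K.+1 * K.+1 + (K - i) by lia.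
  by rewrite modK // ltnS leq_subr.
have m2 : depth (iter j f w) %% K.+1 = K - j.
  have -> : depth (iter j f w) = depth w %/ K.+1 * K.+1 + (K - j) by lia.
  by rewrite modK // ltnS leq_subr.
have ij : i = j by move: m1 m2; rewrite E => ->; lia.
subst j.
move/negP: vw; apply; apply/eqP.
rewrite -(@iter_ch_f i v) ?E ?iter_ch_f // => k ki; apply: Hw || apply: Hv; lia.
Qed.

Lemma Pl_disj : pairwise (fun p q : seq T => [disjoint p & q]) Pl.
Proof.
rewrite pairwise_map.
apply: (sub_in_pairwise (P := mem GB) (r := SimplRel (fun x y : T => x != y))).
- by move=> v w vG wG /= vw; apply: GB_disj.
- by apply/allP => v; rewrite mem_enum.
- by rewrite -uniq_pairwise enum_uniq.
Qed.

End Rooted.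


Section Top.
Variables (T : finType) (e : rel T).
Hypothesis esym : symmetric e.
Hypothesis eirr : irreflexive e.
Hypothesis econn : forall x y : T, connect e x y.
Hypothesis eacyc : forall c : seq T, (3 <= size c)%N -> uniq c -> ~~ cycle e c.

Lemma leaf_uniq l y1 y2 : is_leaf e l -> e l y1 -> e l y2 -> y1 = y2.
Proof.
rewrite /is_leaf /deg => /cards1P [x Ex] h1 h2.
have : y1 \in [set y | e l y] by rewrite inE.
have : y2 \in [set y | e l y] by rewrite inE.
by rewrite Ex !inE => /eqP -> /eqP ->.
Qed.

Lemma leaf_nb l : is_leaf e l -> exists y, e l y.
Proof.
rewrite /is_leaf /deg => /cards1P [x Ex]; exists x.
have : x \in [set y | e l y] by rewrite Ex inE.
by rewrite inE.
Qed.

Lemma closed_path (A : {set T}) x p :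
  (forall u w, u \in A -> e u w -> w \in A) -> x \in A -> path e x p -> last x p \in A.
Proof.
move=> H; elim: p x => [//|y p IH] x xA /= /andP [exy pp].
by apply: IH pp; apply: H exy.
Qed.

Lemma exists_nonleaf : 2 < #|T| -> exists r, ~~ is_leaf e r.
Proof.
move=> n3; case: (boolP [exists r, ~~ is_leaf e r]) => [/existsP //|]; rewrite negb_exists => /forallP Hl.
exfalso.
have : 0 < #|T| by lia.
case/card_gt0P => x _.
have lx : is_leaf e x by have := Hl x; rewrite negbK.
have [y exy] := leaf_nb lx.
have ly : is_leaf e y by have := Hl y; rewrite negbK.
have cl : forall u w, u \in [set x; y] -> e u w -> w \in [set x; y].
  move=> u w; rewrite !inE => /orP [/eqP ->|/eqP ->] euw.
    by rewrite (leaf_uniq lx euw exy) eqxx orbT.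
  by rewrite (leaf_uniq ly euw (etrans (esym y x) exy)) eqxx.
have sub : [set: T] \subset [set x; y].
  apply/subsetP => z _; have /connectP [p pp ->] := econn x z.
  by apply: closed_path pp; rewrite // !inE eqxx.
have := subset_leq_card sub; rewrite cardsT.
have := cards2 x y; lia.
Qed.

Lemma graph_main K : 2 < #|T| -> 0 < K ->
  exists P : seq (seq T), [/\ all (bare_path e) P,
     pairwise (fun p q : seq T => [disjoint p & q]) P,
     (forall p, p \in P -> plen p = K) &
     #|Wset e| <= 2 * K * size P + 12 * K * (#|Sset e| + 1)].
Proof.
move=> n3 K0; have [r rW] := exists_nonleaf n3.
exists (Pl econn r K); split.
- exact: Pl_bare.
- exact: Pl_disj.
- exact: Pl_len.
- have h1 := count_main esym eirr econn eacyc rW K0.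
  have h2 := N_bound esym eirr econn eacyc rW.
  have h3 := cardU_le (Sset e) [set r]; rewrite cards1 in h3.
  rewrite Pl_size; move: h1 h2 h3; nia.
Qed.

End Top.

From mathcomp Require Import reals.
Import Order.TTheory GRing.Theory Num.Theory.

Section Top2.
Variables (T : finType) (e : rel T).
Hypothesis esym : symmetric e.

Definition lf y := odflt y [pick z | e y z && is_leaf e z].

Lemma lf_prop y : y \in Sset e -> e y (lf y) && is_leaf e (lf y).
Proof.
rewrite inE => /existsP [z hz]; rewrite /lf; case: pickP => [z' //|/(_ z)].
by rewrite hz.
Qed.

Definition L0 := [set lf y | y in Sset e].

Lemma L0_card : #|L0| = #|Sset e|.
Proof.
apply: card_in_imset => y1 y2 h1 h2 E.
have /andP [e1 l1] := lf_prop h1; have /andP [e2 l2] := lf_prop h2.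
rewrite esym in e1; rewrite esym -E in e2.
exact: leaf_uniq l1 e1 e2.
Qed.

Lemma L0_nn : non_neighbouring e L0.
Proof.
split.
  by move=> l /imsetP [y yS ->]; case/andP: (lf_prop yS).
move=> l1 l2 y /imsetP [y1 h1 ->] /imsetP [y2 h2 ->] ne.
apply/negP => /andP [a b].
have /andP [e1 k1] := lf_prop h1; have /andP [e2 k2] := lf_prop h2.
rewrite esym in e1; rewrite esym in e2.
have E1 := leaf_uniq k1 a e1; have E2 := leaf_uniq k2 b e2.
by move/negP: ne; apply; rewrite -E1 -E2.
Qed.

Definition nb v := odflt v [pick y | e v y].

Lemma nb_prop v : is_leaf e v -> e v (nb v).
Proof.
move=> lv; have [y hy] := leaf_nb lv; rewrite /nb; case: pickP => [//|/(_ y)].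
by rewrite hy.
Qed.

Local Open Scope ring_scope.
Lemma light_bound (R : realType) (t : R) : 0 <= t ->
  (#|[set v | is_leaf e v && ~~ [exists y, e v y && (t <= (leaf_nbrs e y)%:R)]]|%:R
     <= #|Sset e|%:R * t).
Proof.
move=> t0; set Li := [set v | _].
have E : #|Li| = (\sum_(y in Sset e) #|[set v in Li | nb v == y]|)%N.
  rewrite -sum1_card (partition_big nb (mem (Sset e))) /=; last first.
    move=> v; rewrite inE => /andP [lv _]; rewrite inE; apply/existsP; exists v.
    by rewrite lv andbT esym nb_prop.
  apply: eq_bigr => y _; rewrite -sum1_card; apply: eq_bigl => v; by rewrite !inE.
rewrite E natr_sum -sum1_card natr_sum mulr_suml.
apply: ler_sum => y yS; rewrite mul1r.
case: (boolP ([set v in Li | nb v == y] == set0)) => [/eqP ->|/set0Pn [v]].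
  by rewrite cards0.
rewrite !inE => /andP [/andP [lv nex] /eqP nby].
have lt : (leaf_nbrs e y)%:R < t.
  rewrite ltNge; apply/negP => H; move/negP: nex; apply; apply/existsP; exists y.
  by rewrite -nby nb_prop // nby H.
apply: le_trans (ltW lt); rewrite ler_nat; apply: subset_leq_card; apply/subsetP => z.
rewrite !inE => /andP [/andP [lz _] /eqP <-]; by rewrite lz andbT esym nb_prop.
Qed.

End Top2.

From mathcomp Require Import reals.
From mathcomp Require Import ring lra zify.
Import Order.TTheory GRing.Theory Num.Theory.
Local Open Scope ring_scope.

Lemma arith (R : realType) (d n u Kr S W X Li P : R) :
  0 < d -> d <= 100^-1 -> d * u = 1 -> 100 <= n * d ^+ 2 ->
  u < Kr -> Kr <= u + 1 ->
  S < d ^+ 6 * n -> n / 100 < X -> X <= W + Li -> Li <= S * d ^- 4 ->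
  W <= 2 * Kr * P + 12 * Kr * (S + 1) -> 0 <= S -> 0 <= P ->
  d * n / 800 <= P.
Proof.
move=> d0 d1 du hd uK Ku hS hX hXW hLi hW S0 P0.
have u0 : 0 < u by nra.
have u1 : 100 <= u by nra.
have ud : u = d^-1 by rewrite -(mulKf (lt0r_neq0 d0) u) du mulr1.
have d4 : d ^- 4 = u ^+ 4 by rewrite ud exprVn.
have b1 : S * d ^- 4 <= d ^+ 2 * n.
  rewrite d4; have -> : d ^+ 2 * n = d ^+ 6 * n * u ^+ 4.
    have -> : d ^+ 6 * n * u ^+ 4 = d ^+ 2 * n * (d * u) ^+ 4 by ring.
    by rewrite du expr1n mulr1.
  by apply: ler_wpM2r; [apply: exprn_ge0; lra | lra].
have b2 : Kr * S <= 2 * d ^+ 2 * n.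
  have : Kr * S <= 2 * u * (d ^+ 6 * n).
    apply: (@le_trans _ _ (2 * u * S)); first by apply: ler_wpM2r; lra.
    by apply: ler_wpM2l; lra.
  have -> : 2 * u * (d ^+ 6 * n) = 2 * (d * u) * (d ^+ 5 * n) by ring.
  rewrite du mulr1 => h; apply: le_trans h _.
  have : d ^+ 5 <= d ^+ 2 by apply: ler_wiXn2l => //; lra.
  have : 0 <= n by nra.
  nra.
have b3 : 100 * u <= n * d.
  have : 100 * u <= n * d ^+ 2 * u by nra.
  have -> : n * d ^+ 2 * u = n * d * (d * u) by ring.
  by rewrite du mulr1.
have b4 : d ^+ 2 <= d / 100 by rewrite expr2; nra.
have n0 : 0 <= n by nra.
have b5 : 2 * Kr * P <= 4 * u * P by nra.
have : n / 200 <= 4 * u * P by nra.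
move=> h.
have : n * d / 200 <= 4 * (d * u) * P by nra.
rewrite du; lra.
Qed.

Theorem lemma3p5 :
  exists C : nat, (0 < C)%N /\
  forall (R : realType) (delta : R) (n : nat),
    0 < delta -> delta <= (C%:R)^-1 -> (0 < n)%N ->
    (n%:R)^-1 <= delta ^+ C / C%:R ->
    forall (T : finType) (e : rel T), #|T| = n -> is_tree e ->
      (* (A) *)
      (exists P : seq (seq T),
          [/\ all (bare_path e) P,
              pairwise (fun p q : seq T => [disjoint p & q]) P,
              all (fun p => delta^-1 <= (plen p)%:R) P &
              delta * n%:R / 800 <= ((size P)%:R : R)])
      \/
      (* (B) *)
      (exists L : {set T}, non_neighbouring e L /\ delta ^+ 6 * n%:R <= #|L|%:R)
      \/
      (* (C) *)
      (#|[set v : T | ~~ (is_leaf e v &&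
            [exists y, e v y && (delta ^- 4 <= (leaf_nbrs e y)%:R)])]|%:R
         <= (n%:R : R) / 100).
Proof.
exists 100%N; split => //.
move=> R d n d0 d1 n0 hn T e cT [esym eirr econn eacyc].
have d1' : d <= 1 by apply: le_trans d1 _; rewrite invf_le1 // ler1n.
have nR0 : 0 < (n%:R : R) by rewrite ltr0n.
have hd2 : 100 <= n%:R * d ^+ 2.
  have h1 : d ^+ 100 <= d ^+ 2 by apply: ler_wiXn2l => //; lra.
  have h2 : (n%:R : R)^-1 <= d ^+ 2 / 100.
    apply: le_trans hn _; apply: ler_wpM2r => //; rewrite invr_ge0; lra.
  have h3 : (n%:R : R)^-1 * (100 * n%:R) <= d ^+ 2 / 100 * (100 * n%:R).
    by apply: ler_wpM2r => //; lra.
  have e1 : (n%:R : R)^-1 * (100 * n%:R) = 100 by field; lra.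
  have e2 : d ^+ 2 / 100 * (100 * n%:R) = n%:R * d ^+ 2 by field.
  by rewrite -e1 -e2.
have n100 : (2 < #|T|)%N.
  rewrite cT; have : (100 : R) <= n%:R.
    have : d ^+ 2 <= 1 by apply: exprn_ile1 => //; lra.
    nra.
  rewrite ler_nat; lia.
set K := (Num.truncn (d^-1)).+1.
have K0 : (0 < K)%N by [].
have hK1 : d^-1 < K%:R by apply: truncnS_gt.
have hK2 : (K%:R : R) <= d^-1 + 1.
  have dpos : 0 <= d^-1 by rewrite invr_ge0 ltW.
  by rewrite /K -addn1 natrD lerD2r; case/andP: (truncn_itv dpos).
have [P [Pb Pd Pl Pw]] := graph_main esym eirr econn eacyc n100 K0.
case: (boolP (d ^+ 6 * n%:R <= #|L0 e|%:R)) => hB.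
  right; left; exists (L0 e); split => //; exact: L0_nn.
set X := [set v : T | _].
case: (boolP (#|X|%:R <= (n%:R : R) / 100)) => hC; first by right; right.
left; exists P; split => //.
  apply/allP => p pP; rewrite Pl //; exact: ltW.
have hS : (#|Sset e|%:R : R) < d ^+ 6 * n%:R by rewrite -(L0_card esym) ltNge.
have hX : (n%:R : R) / 100 < #|X|%:R by rewrite ltNge.
set Li := [set v | is_leaf e v && ~~ [exists y, e v y && (d ^- 4 <= (leaf_nbrs e y)%:R)]].
have hXW : (#|X|%:R : R) <= #|Wset e|%:R + #|Li|%:R.
  rewrite -natrD ler_nat; apply: leq_trans (cardU_le _ _); apply: subset_leq_card.
  apply/subsetP => v; rewrite !inE negb_and; by case: (is_leaf e v).
have hLi : (#|Li|%:R : R) <= #|Sset e|%:R * d ^- 4.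
  by apply: light_bound => //; rewrite invr_ge0 exprn_ge0 // ltW.
have hW : (#|Wset e|%:R : R) <= 2 * K%:R * (size P)%:R + 12 * K%:R * (#|Sset e|%:R + 1).
  move: Pw; rewrite -(ler_nat R) => h; apply: le_trans h _.
  by rewrite natrD !natrM natrD.
apply: (@arith R d n%:R d^-1 K%:R _ _ _ _ _ d0 d1 _ hd2 hK1 hK2 hS hX hXW hLi hW) => //.
by rewrite mulfV // lt0r_neq0.
Qed.
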